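(* Let $f(z)=z+\sum_{k=2}^\infty b_kz^k\in\mathscr{S}^*_\wp$ and $\alpha=(1+e)^2$. Then $\sum_{k=2}^\infty (k^2-\alpha)|b_k|^2\le\alpha-1$. Consequently, if $f(z)=z+\sum_{k\ge4}b_kz^k\in\mathscr{S}^*_\wp$, then $|b_k|\le\sqrt{(\alpha-1)/(k^2-\alpha)}$ for all $k\ge4$.
   Context: $\mathbb{D}$ is the unit disk; $\mathcal{A}$ is the class of analytic $f$ on $\mathbb{D}$ with $f(0)=0,f'(0)=1$. $f\prec g$ means $f=g\circ\omega$ for analytic $\omega:\mathbb{D}\to\mathbb{D}$, $\omega(0)=0$. $\wp(z)=1+ze^z$, $\mathscr{S}^*_\wp=\{f\in\mathcal{A}:zf'(z)/f(z)\prec\wp(z)\}$. *)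

(* Defs.v *)
From Stdlib Require Import Reals.
From Coquelicot Require Import Coquelicot.
Open Scope R_scope.

Definition inD (z : C) : Prop := Cmod z < 1.

Definition Cexp (z : C) : C :=
  (exp (fst z) * cos (snd z), exp (fst z) * sin (snd z)).

Definition analytic_on_D (g : C -> C) : Prop :=
  forall z, inD z -> @ex_derive C_AbsRing C_NormedModule g z.

Definition subordinate (F G : C -> C) : Prop :=
  exists w : C -> C, analytic_on_D w /\ w 0%C = 0%C /\
    (forall z, inD z -> inD (w z)) /\
    (forall z, inD z -> F z = G (w z)).

Definition wp (z : C) : C := (1 + z * Cexp z)%C.

Definition classA (f : C -> C) : Prop :=
  analytic_on_D f /\ f 0%C = 0%C /\
  @is_derive C_AbsRing C_NormedModule f (0%C : C) (1%C : C).

(* S*_℘ : f ∈ A, f(z) ≠ 0 on D\{0} (so that z f'(z)/f(z) is defined there,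
   with its removable value 1 at z = 0), and z f'(z)/f(z) ≺ ℘(z). *)
Definition Sstar_wp (f : C -> C) : Prop :=
  classA f /\
  (forall z, inD z -> z <> 0%C -> f z <> 0%C) /\
  exists f' : C -> C,
    (forall z, inD z -> @is_derive C_AbsRing C_NormedModule f z (f' z)) /\
    subordinate (fun z => if Ceq_dec z 0%C then 1%C else (z * f' z / f z)%C) wp.

Definition alpha : R := (1 + exp 1) ^ 2.

(* Main.v *)
Require Import Defs.
From Stdlib Require Import Reals.
From Coquelicot Require Import Coquelicot.
From Stdlib Require Import Lra Lia Psatz Arith.
Open Scope R_scope.


Fixpoint fs (n : nat) (f : nat -> R) : R :=
  match n with O => 0 | S k => fs k f + f k end.
Fixpoint fsC (n : nat) (f : nat -> C) : C :=
  match n with O => 0%C | S k => (fsC k f + f k)%C end.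

Lemma fs_ext n f g : (forall i, (i < n)%nat -> f i = g i) -> fs n f = fs n g.
Proof. induction n; simpl; intros H; auto. rewrite IHn; [rewrite H|]; auto. Qed.
Lemma fs_le n f g : (forall i, (i < n)%nat -> f i <= g i) -> fs n f <= fs n g.
Proof. induction n; simpl; intros H; [lra|]. specialize (IHn (fun i Hi => H i ltac:(lia))). specialize (H n ltac:(lia)). lra. Qed.
Lemma fs_plus n f g : fs n (fun i => f i + g i) = fs n f + fs n g.
Proof. induction n; simpl; [lra|]. rewrite IHn; ring. Qed.
Lemma fs_scal n c f : fs n (fun i => c * f i) = c * fs n f.
Proof. induction n; simpl; [ring|]. rewrite IHn; ring. Qed.
Lemma fs_const0 n : fs n (fun _ => 0) = 0.
Proof. induction n; simpl; [|rewrite IHn]; ring. Qed.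
Lemma fs_nonneg n f : (forall i, (i < n)%nat -> 0 <= f i) -> 0 <= fs n f.
Proof. intros H. rewrite <- (fs_const0 n). apply fs_le; auto. Qed.
Lemma fs_swap n m (f : nat -> nat -> R) :
  fs n (fun i => fs m (fun j => f i j)) = fs m (fun j => fs n (fun i => f i j)).
Proof. induction n; simpl. now rewrite fs_const0. rewrite IHn, <- fs_plus. reflexivity. Qed.
Lemma fs_split n m f : fs (n + m) f = fs n f + fs m (fun k => f (n + k)%nat).
Proof. induction m; simpl. rewrite Nat.add_0_r; ring. rewrite Nat.add_succ_r; simpl. rewrite IHm; ring. Qed.
Lemma fs_delta n k X : (k < n)%nat ->
  fs n (fun m => if Nat.eq_dec k m then X else 0) = X.
Proof.
  induction n; intros H; [lia|]. simpl. destruct (Nat.eq_dec k n).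
  - subst. rewrite (fs_ext _ _ (fun _ => 0)). rewrite fs_const0; ring.
    intros i Hi. destruct (Nat.eq_dec n i); [lia|auto].
  - rewrite IHn; [ring|lia].
Qed.
Lemma fs_mul_fs n f g : fs n f * fs n g = fs n (fun i => fs n (fun j => f i * g j)).
Proof.
  assert (E : forall c h, fs n h * c = fs n (fun i => h i * c)).
  { intros c h. rewrite Rmult_comm, <- (fs_scal n c h). apply fs_ext; intros; ring. }
  rewrite E. apply fs_ext; intros i _. rewrite <- (fs_scal n (f i) g). reflexivity.
Qed.
Lemma fs_term_le n f k : (forall i, (i < n)%nat -> 0 <= f i) -> (k < n)%nat -> f k <= fs n f.
Proof.
  induction n; intros H Hk; [lia|]. simpl. destruct (Nat.eq_dec k n).
  - subst. assert (0 <= fs n f) by (apply fs_nonneg; intros; apply H; lia). lra.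
  - assert (f k <= fs n f) by (apply IHn; [intros; apply H|]; lia). specialize (H n ltac:(lia)); lra.
Qed.

Lemma fsC_fst n f : fst (fsC n f) = fs n (fun i => fst (f i)).
Proof. induction n; simpl; auto. rewrite IHn; reflexivity. Qed.
Lemma fsC_snd n f : snd (fsC n f) = fs n (fun i => snd (f i)).
Proof. induction n; simpl; auto. rewrite IHn; reflexivity. Qed.
Lemma fsC_ext n f g : (forall i, (i < n)%nat -> f i = g i) -> fsC n f = fsC n g.
Proof. induction n; simpl; intros H; auto. rewrite IHn; [rewrite H|]; auto. Qed.
Lemma Cmod_fsC n f : Cmod (fsC n f) <= fs n (fun i => Cmod (f i)).
Proof. induction n; simpl. rewrite Cmod_0; lra. eapply Rle_trans; [apply Cmod_triangle|]. lra. Qed.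
Lemma fsC_split n m f : fsC (n + m) f = (fsC n f + fsC m (fun k => f (n + k)%nat))%C.
Proof. induction m; simpl. rewrite Nat.add_0_r; ring. rewrite Nat.add_succ_r; simpl. rewrite IHm; ring. Qed.
Lemma fsC_minus n f g : (fsC n f - fsC n g)%C = fsC n (fun i => f i - g i)%C.
Proof. induction n; simpl. ring. rewrite <- IHn; ring. Qed.
Lemma fsC_multl n c f : (c * fsC n f)%C = fsC n (fun i => c * f i)%C.
Proof. induction n; simpl. ring. rewrite <- IHn; ring. Qed.

Lemma sum_n_fsC (a : nat -> C) M : @sum_n C_AbelianMonoid a M = fsC (S M) a.
Proof. induction M. rewrite sum_O; simpl; ring_simplify; reflexivity.
  unfold sum_n in *. rewrite sum_n_Sm by lia. rewrite IHM. reflexivity. Qed.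
Lemma sum_n_fs (a : nat -> R) M : sum_n a M = fs (S M) a.
Proof. induction M. rewrite sum_O; simpl; ring.
  unfold sum_n in *. rewrite sum_n_Sm by lia. rewrite IHM. reflexivity. Qed.

Lemma pow_decr s m n : 0 <= s <= 1 -> (m <= n)%nat -> s ^ n <= s ^ m.
Proof. intros Hs Hmn. replace n with (m + (n - m))%nat by lia. rewrite pow_add.
  assert (s ^ (n - m) <= 1) by (rewrite <- (pow1 (n - m)); apply pow_incr; lra).
  assert (0 <= s ^ m) by (apply pow_le; lra). nra. Qed.
Lemma fs_geom n s : fs n (fun k => s ^ k) * (1 - s) = 1 - s ^ n.
Proof. induction n; simpl. ring. rewrite Rmult_plus_distr_r, IHn. ring. Qed.
Lemma fs_geom_le n s : 0 <= s < 1 -> fs n (fun k => s ^ k) <= / (1 - s).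
Proof. intros Hs. pose proof (fs_geom n s). assert (0 <= s ^ n) by (apply pow_le; lra).
  apply (Rmult_le_reg_r (1 - s)); [lra|]. rewrite Rinv_l by lra. lra. Qed.
Lemma k_pow_le k s : 0 <= s < 1 -> INR k * s ^ k <= / (1 - s).
Proof. intros Hs. eapply Rle_trans; [|apply (fs_geom_le k)]; auto.
  assert (H : forall m, (m <= k)%nat -> INR m * s ^ k <= fs m (fun i => s ^ i)).
  { induction m; intros Hm. simpl; lra. rewrite S_INR. simpl.
    assert (s ^ k <= s ^ m) by (apply pow_decr; [lra|lia]). specialize (IHm ltac:(lia)). lra. }
  apply H; lia.
Qed.


Lemma pown_Cpow (z : C) n : @pow_n C_Ring z n = Cpow z n.
Proof. induction n; simpl; [reflexivity|]. rewrite IHn; reflexivity. Qed.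

Lemma series_LB (a : nat -> C) (l c : C) (E : R) (M0 : nat) :
  @is_series C_AbsRing C_NormedModule a l ->
  (forall M, (M0 <= M)%nat -> Cmod (fsC (S M) a - c) <= E) ->
  Cmod (l - c) <= E.
Proof.
  intros Hs HM. destruct (Rle_or_lt (Cmod (l - c)) E) as [H|H]; auto. exfalso.
  assert (Hs2 : 0 < sqrt 2) by (apply sqrt_lt_R0; lra).
  assert (He : 0 < (Cmod (l - c) - E) / 2 / sqrt 2).
  { apply Rdiv_lt_0_compat; lra. }
  destruct (proj1 (filterlim_locally _ _) Hs (mkposreal _ He)) as [N HN]. specialize (HN (max N M0) ltac:(lia)).
  apply C_NormedModule_mixin_compat2 in HN. simpl in HN.
  replace (sqrt 2 * ((Cmod (l - c) - E) / 2 / sqrt 2)) with ((Cmod (l - c) - E) / 2) in HN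
    by (field; lra).
  specialize (HM (max N M0) ltac:(lia)). rewrite <- (sum_n_fsC a) in HM.
  set (S := sum_n a (max N M0)) in *.
  assert (E1 : Cmod (minus S l) = Cmod (l - S)%C).
  { rewrite <- Cmod_opp. f_equal. unfold minus, plus, opp; simpl. ring. }
  change (Cmod (minus S l) < (Cmod (l - c) - E) / 2) in HN. rewrite E1 in HN.
  assert (Cmod (l - c) <= Cmod (l - S) + Cmod (S - c)).
  { replace (l - c)%C with ((l - S) + (S - c))%C by ring. apply Cmod_triangle. }
  lra.
Qed.

Lemma pseries_LB (b : nat -> C) (z l c : C) (E : R) (M0 : nat) :
  @is_pseries C_AbsRing C_NormedModule b z l ->
  (forall M, (M0 <= M)%nat -> Cmod (fsC (S M) (fun k => Cpow z k * b k)%C - c) <= E) ->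
  Cmod (l - c) <= E.
Proof.
  intros Hs HM. apply (series_LB _ l c E M0 Hs). intros M HMM.
  rewrite (fsC_ext _ _ (fun k => Cpow z k * b k)%C). auto.
  intros i _. rewrite <- pown_Cpow. reflexivity.
Qed.

Lemma series_bounded (a : nat -> C) (l : C) :
  @is_series C_AbsRing C_NormedModule a l -> exists B, 0 <= B /\ forall n, Cmod (a n) <= B.
Proof.
  intros Hs. assert (He : 0 < 1) by lra.
  destruct (proj1 (filterlim_locally _ _) Hs (mkposreal _ He)) as [N HN].
  assert (Hs2 : 0 < sqrt 2) by (apply sqrt_lt_R0; lra).
  assert (HN' : forall M, (N <= M)%nat -> Cmod (fsC (S M) a - l) < sqrt 2).
  { intros M HM. specialize (HN M HM). apply C_NormedModule_mixin_compat2 in HN.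
    simpl in HN. rewrite <- sum_n_fsC. rewrite Rmult_1_r in HN. exact HN. }
  assert (H0 : 0 <= fs (S N) (fun i => Cmod (a i))) by (apply fs_nonneg; intros; apply Cmod_ge_0).
  exists (fs (S N) (fun i => Cmod (a i)) + 2 * sqrt 2). split; [lra|]. intros n.
  destruct (le_lt_dec n N) as [Hn|Hn].
  - assert (Cmod (a n) <= fs (S N) (fun i => Cmod (a i))).
    { apply (fs_term_le (S N) (fun i => Cmod (a i))); [intros; apply Cmod_ge_0|lia]. }
    lra.
  - destruct n as [|n]; [lia|].
    assert (E : a (S n) = ((fsC (S (S n)) a - l) - (fsC (S n) a - l))%C) by (simpl; ring).
    rewrite E. eapply Rle_trans; [apply Cmod_triangle|]. rewrite Cmod_opp.
    pose proof (HN' (S n) ltac:(lia)). pose proof (HN' n ltac:(lia)). lra.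
Qed.

Lemma Cmod_Cpow_real (r : R) n : 0 <= r -> Cmod (Cpow (RtoC r) n) = r ^ n.
Proof. intros Hr. rewrite Cmod_pow, Cmod_R, Rabs_pos_eq; auto. Qed.

Lemma envelope (b : nat -> C) (f : C -> C) :
  (forall z, inD z -> @is_pseries C_AbsRing C_NormedModule b z (f z)) ->
  forall rho, 0 < rho < 1 -> exists B, 0 <= B /\ forall n, Cmod (b n) * rho ^ n <= B.
Proof.
  intros Hp rho Hr.
  assert (HD : inD (RtoC rho)) by (unfold inD; rewrite Cmod_R, Rabs_pos_eq; lra).
  destruct (series_bounded _ _ (Hp _ HD)) as [B [HB HBn]]. exists B; split; auto.
  intros n. specialize (HBn n). simpl in HBn.
  change (Cmod (mult (pow_n (K:=C_Ring) (RtoC rho) n) (b n)) <= B) in HBn.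
  rewrite pown_Cpow in HBn. change (Cmod (Cpow (RtoC rho) n * b n)%C <= B) in HBn.
  rewrite Cmod_mult, Cmod_Cpow_real in HBn by lra. lra.
Qed.

Lemma envelope2 (b : nat -> C) (f : C -> C) :
  (forall z, inD z -> @is_pseries C_AbsRing C_NormedModule b z (f z)) ->
  forall t, 0 < t < 1 -> exists B s, 0 <= B /\ 0 < s < 1 /\
    forall n, Cmod (b n) * t ^ n <= B * s ^ (2 * n).
Proof.
  intros Hp t Ht. set (s := (1 + t) / 2). assert (Hs : 0 < s < 1) by (unfold s; lra).
  assert (Hss : t < s * s) by (unfold s; nra).
  set (rho := t / (s * s)). assert (Hrho : 0 < rho < 1).
  { unfold rho. split. apply Rdiv_lt_0_compat; nra. apply (Rmult_lt_reg_r (s * s)); [nra|].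
    unfold Rdiv. rewrite Rmult_assoc, Rinv_l by nra. lra. }
  destruct (envelope b f Hp rho Hrho) as [B [HB HBn]]. exists B, s. repeat split; auto; try lra.
  intros n. replace t with (rho * (s * s)) by (unfold rho; field; nra).
  rewrite Rpow_mult_distr, pow_mult. simpl (s ^ 2). rewrite Rmult_1_r.
  rewrite <- Rmult_assoc. apply Rmult_le_compat_r; [apply pow_le; nra|]. apply HBn.
Qed.


Lemma my_le_eps a b : (forall e, 0 < e -> a <= b + e) -> a <= b.
Proof. intros H. destruct (Rle_or_lt a b); auto. specialize (H ((a - b) / 2) ltac:(lra)). lra. Qed.

Lemma Cpow_le (z : C) t n : Cmod z <= t -> Cmod (Cpow z n) <= t ^ n.
Proof. intros H. rewrite Cmod_pow. apply pow_incr. split; [apply Cmod_ge_0|auto]. Qed.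

Lemma poly_est1 (z h : C) t n : Cmod z <= t -> Cmod (z + h) <= t ->
  t * Cmod (Cpow (z + h) n - Cpow z n) <= INR n * Cmod h * t ^ n.
Proof.
  intros Hz Hzh. assert (Ht : 0 <= t) by (pose proof (Cmod_ge_0 z); lra).
  induction n.
  - cbn [Cpow]. unfold Cminus; rewrite Cplus_opp_r, Cmod_0; simpl; lra.
  - replace (Cpow (z + h) (S n) - Cpow z (S n))%C with
      ((z + h) * (Cpow (z + h) n - Cpow z n) + h * Cpow z n)%C by (cbn [Cpow]; ring).
    pose proof (Cmod_triangle ((z + h) * (Cpow (z + h) n - Cpow z n)) (h * Cpow z n)).
    rewrite !Cmod_mult in H. pose proof (Cpow_le z t n Hz).
    pose proof (Cmod_ge_0 h). pose proof (Cmod_ge_0 (Cpow (z + h) n - Cpow z n)).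
    pose proof (Cmod_ge_0 (z+h)). pose proof (Cmod_ge_0 (Cpow z n)).
    rewrite S_INR. simpl (t ^ S n).
    assert (t * Cmod (z + h) * Cmod (Cpow (z + h) n - Cpow z n) <= t * (INR n * Cmod h * t ^ n)).
    { rewrite (Rmult_comm t), Rmult_assoc. apply Rmult_le_compat; nra. }
    assert (t * (Cmod h * Cmod (Cpow z n)) <= t * (Cmod h * t ^ n)).
    { apply Rmult_le_compat_l; auto. apply Rmult_le_compat_l; auto. }
    nra.
Qed.

Definition dterm (z : C) (n : nat) : C := (RtoC (INR n) * Cpow z (pred n))%C.

Lemma dterm_z z n : (z * dterm z n)%C = (RtoC (INR n) * Cpow z n)%C.
Proof. unfold dterm. destruct n; cbn [pred Cpow]. simpl INR. ring. ring. Qed.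

Lemma poly_est2 (z h : C) t n : Cmod z <= t -> Cmod (z + h) <= t ->
  t ^ 2 * Cmod (Cpow (z + h) n - Cpow z n - h * dterm z n) <= INR n ^ 2 * Cmod h ^ 2 * t ^ n.
Proof.
  intros Hz Hzh. assert (Ht : 0 <= t) by (pose proof (Cmod_ge_0 z); lra).
  pose proof (Cmod_ge_0 h) as Hh.
  induction n.
  - unfold dterm. cbn [Cpow pred]. simpl INR.
    replace (1 - 1 - h * (RtoC 0 * 1))%C with (RtoC 0) by ring. rewrite Cmod_0. simpl; nra.
  - assert (Eq : (Cpow (z + h) (S n) - Cpow z (S n) - h * dterm z (S n))%C =
      ((z + h) * (Cpow (z + h) n - Cpow z n - h * dterm z n) + h * h * dterm z n)%C).
    { unfold dterm. cbn [Cpow pred]. rewrite S_INR, RtoC_plus.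
      pose proof (dterm_z z n) as D. unfold dterm in D.
      transitivity ((z + h) * Cpow (z + h) n - z * Cpow z n - h * (RtoC (INR n) * Cpow z n)
         - h * Cpow z n)%C. ring. rewrite <- D. ring. }
    rewrite Eq. clear Eq.
    set (En := (Cpow (z + h) n - Cpow z n - h * dterm z n)%C) in *.
    pose proof (Cmod_triangle ((z + h) * En) (h * h * dterm z n)).
    rewrite !Cmod_mult in H. pose proof (Cmod_ge_0 En). pose proof (Cmod_ge_0 (z + h)).
    assert (HD : t ^ 2 * Cmod (dterm z n) <= INR n * t ^ S n).
    { unfold dterm. rewrite Cmod_mult, Cmod_R, Rabs_pos_eq by apply pos_INR.
      destruct n. simpl INR. ring_simplify. lra.
      cbn [pred]. pose proof (Cpow_le z t n Hz). pose proof (pos_INR (S n)).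
      replace (t ^ S (S n)) with (t ^ 2 * t ^ n) by (simpl; ring).
      assert (0 <= t ^ 2) by (apply pow_le; lra). 
      assert (0 <= Cmod (Cpow z n)) by apply Cmod_ge_0.
      replace (t ^ 2 * (INR (S n) * Cmod (Cpow z n))) with (INR (S n) * (t ^ 2 * Cmod (Cpow z n))) by ring.
      apply Rmult_le_compat_l; auto. apply Rmult_le_compat_l; auto. }
    pose proof (pos_INR n). rewrite S_INR. simpl (t ^ S n) in *.
    assert (A1 : t ^ 2 * (Cmod (z + h) * Cmod En) <= t * (INR n ^ 2 * Cmod h ^ 2 * t ^ n)).
    { replace (t ^ 2 * (Cmod (z + h) * Cmod En)) with (Cmod (z + h) * (t ^ 2 * Cmod En)) by ring.
      apply Rmult_le_compat; auto; nra. }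
    assert (A2 : t ^ 2 * (Cmod h * Cmod h * Cmod (dterm z n)) <= Cmod h ^ 2 * (INR n * (t * t ^ n))).
    { replace (t ^ 2 * (Cmod h * Cmod h * Cmod (dterm z n))) with (Cmod h ^ 2 * (t ^ 2 * Cmod (dterm z n))) by ring.
      apply Rmult_le_compat_l; [nra|]. exact HD. }
    assert (0 <= t ^ n) by (apply pow_le; lra).
    assert (0 <= INR n * Cmod h ^ 2 * (t * t ^ n)) by (apply Rmult_le_pos; [nra| nra]).
    assert (t ^ 2 * Cmod ((z + h) * En + h * h * dterm z n) <= t ^ 2 * (Cmod (z + h) * Cmod En + Cmod h * Cmod h * Cmod (dterm z n))).
    { apply Rmult_le_compat_l; [nra|exact H]. }
    assert (0 <= Cmod h ^ 2 * (t * t ^ n)) by (apply Rmult_le_pos; nra).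
    lra.
Qed.

Definition Fk (K : nat) (b : nat -> C) (z : C) : C := fsC K (fun k => Cpow z k * b k)%C.
Definition Dk (K : nat) (b : nat -> C) (z : C) : C := fsC K (fun k => dterm z k * b k)%C.

Lemma tail_a (b : nat -> C) t B s K m : 0 <= t -> 0 <= B -> 0 <= s < 1 ->
  (forall n, Cmod (b n) * t ^ n <= B * s ^ (2 * n)) ->
  fs m (fun k => Cmod (b (K + k)%nat) * t ^ (K + k)) <= B * s ^ K / (1 - s).
Proof.
  intros Ht HB Hs Hb.
  apply Rle_trans with (fs m (fun k => (B * s ^ K) * s ^ k)).
  - apply fs_le. intros i _. eapply Rle_trans; [apply Hb|].
    rewrite Rmult_assoc, <- pow_add. apply Rmult_le_compat_l; auto. apply pow_decr; [lra|lia].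
  - rewrite fs_scal. unfold Rdiv. apply Rmult_le_compat_l.
    apply Rmult_le_pos; auto; apply pow_le; lra. apply fs_geom_le; auto.
Qed.

Lemma tail_b (b : nat -> C) t B s K m : 0 <= t -> 0 <= B -> 0 <= s < 1 ->
  (forall n, Cmod (b n) * t ^ n <= B * s ^ (2 * n)) ->
  fs m (fun k => Cmod (b (K + k)%nat) * INR (K + k) * t ^ (K + k)) <= B * s ^ K / (1 - s) ^ 2.
Proof.
  intros Ht HB Hs Hb.
  apply Rle_trans with (fs m (fun k => (B * s ^ K / (1 - s)) * s ^ k)).
  - apply fs_le. intros i _. specialize (Hb (K + i)%nat). pose proof (pos_INR (K + i)).
    pose proof (k_pow_le (K + i) s Hs).
    replace (Cmod (b (K + i)%nat) * INR (K + i) * t ^ (K + i)) with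
      (INR (K + i) * (Cmod (b (K + i)%nat) * t ^ (K + i))) by ring.
    eapply Rle_trans. apply Rmult_le_compat_l; [auto|exact Hb].
    replace (2 * (K + i))%nat with ((K + i) + (K + i))%nat by lia. rewrite pow_add.
    replace (B * s ^ K / (1 - s) * s ^ i) with (B * s ^ (K + i) * / (1 - s)) by (rewrite pow_add; field; lra).
    replace (INR (K + i) * (B * (s ^ (K + i) * s ^ (K + i)))) with (B * s ^ (K + i) * (INR (K + i) * s ^ (K + i))) by ring.
    apply Rmult_le_compat_l; auto. apply Rmult_le_pos; auto; apply pow_le; lra.
  - rewrite fs_scal. replace (B * s ^ K / (1 - s) ^ 2) with (B * s ^ K / (1 - s) * / (1 - s)) by (field; lra).
    apply Rmult_le_compat_l. unfold Rdiv. apply Rmult_le_pos. apply Rmult_le_pos; auto; apply pow_le; lra.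
    apply Rlt_le, Rinv_0_lt_compat; lra. apply fs_geom_le; auto.
Qed.

Lemma deriv_coeff (b : nat -> C) (f : C -> C) t B s z l K :
  0 < t < 1 -> 0 <= B -> 0 < s < 1 ->
  (forall n, Cmod (b n) * t ^ n <= B * s ^ (2 * n)) ->
  (forall z, inD z -> @is_pseries C_AbsRing C_NormedModule b z (f z)) ->
  Cmod z < t ->
  @is_derive C_AbsRing C_NormedModule f z l ->
  Cmod (l - Dk K b z) <= B * s ^ K / (t * (1 - s) ^ 2).
Proof.
  intros Ht HB Hs Hb Hp Hz Hder.
  set (tau := B * s ^ K / (t * (1 - s) ^ 2)).
  apply my_le_eps; intros e He. set (eps := e / 2).
  assert (Heps : 0 < eps) by (unfold eps; lra).
  destruct Hder as [_ Hd]. specialize (Hd z (fun P H => H) (mkposreal eps Heps)).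
  destruct (locally_le_locally_norm z _ Hd) as [delta Hdelta].
  assert (Hd' : forall y, Cmod (y - z) < delta ->
     Cmod (f y - f z - (y - z) * l) <= eps * Cmod (y - z)).
  { intros y Hy. apply (Hdelta y). apply C_NormedModule_mixin_compat1. exact Hy. }
  clear Hdelta.
  set (A := fs K (fun n => Cmod (b n) * INR n ^ 2 * t ^ n) / t ^ 2).
  assert (HA : 0 <= A).
  { unfold A. apply Rmult_le_pos; [|apply Rlt_le, Rinv_0_lt_compat; nra].
    apply fs_nonneg; intros i _. pose proof (Cmod_ge_0 (b i)). pose proof (pos_INR i).
    assert (0 <= t ^ i) by (apply pow_le; lra). apply Rmult_le_pos; [|auto]. nra. }
  pose proof (cond_pos delta) as Hdel.
  set (h := Rmin (delta / 2) (Rmin (t - Cmod z) (eps / (A + 1)))).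
  assert (Hh0 : 0 < h).
  { unfold h. apply Rmin_glb_lt; [lra|]. apply Rmin_glb_lt; [lra|]. apply Rdiv_lt_0_compat; lra. }
  assert (Hh1 : h < delta) by (unfold h; pose proof (Rmin_l (delta/2) (Rmin (t - Cmod z) (eps / (A + 1)))); lra).
  assert (Hh2 : h <= t - Cmod z).
  { unfold h. eapply Rle_trans; [apply Rmin_r|apply Rmin_l]. }
  assert (Hh3 : h * A <= eps).
  { assert (h <= eps / (A + 1)) by (unfold h; eapply Rle_trans; [apply Rmin_r|apply Rmin_r]).
    apply Rle_trans with (eps / (A + 1) * A). apply Rmult_le_compat_r; auto.
    unfold Rdiv. rewrite Rmult_assoc. rewrite <- (Rmult_1_r eps) at 2. apply Rmult_le_compat_l; [lra|].
    apply (Rmult_le_reg_l (A + 1)); [lra|]. rewrite <- Rmult_assoc, Rinv_r by lra. lra. }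
  assert (Hmh : Cmod (RtoC h) = h) by (rewrite Cmod_R, Rabs_pos_eq; lra).
  set (y := (z + RtoC h)%C).
  assert (Hy : Cmod y <= t).
  { unfold y. eapply Rle_trans; [apply Cmod_triangle|]. lra. }
  assert (Hzt : Cmod z <= t) by lra.
  assert (D1 : Cmod (f y - f z - RtoC h * l) <= eps * h).
  { assert (Eyz : (y - z)%C = RtoC h) by (unfold y; ring).
    pose proof (Hd' y) as Q. rewrite Eyz, Hmh in Q. apply Q. lra. }
  assert (D2 : Cmod (f y - f z - RtoC h * Dk K b z) <= h ^ 2 * A + h * tau).
  { assert (Hyd : inD y) by (unfold inD; lra). assert (Hzd : inD z) by (unfold inD; lra).
    pose proof (is_series_minus _ _ _ _ (Hp y Hyd) (Hp z Hzd)) as HS.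
    apply (series_LB _ (f y - f z)%C _ _ K HS). intros M HM.
    rewrite (fsC_ext _ _ (fun n => Cpow y n * b n - Cpow z n * b n)%C)
      by (intros i _; rewrite <- !pown_Cpow; reflexivity).
    replace (S M) with (K + (S M - K))%nat by lia. rewrite fsC_split.
    set (m := (S M - K)%nat).
    assert (P1 : Cmod (fsC K (fun n => Cpow y n * b n - Cpow z n * b n)%C - RtoC h * Dk K b z) <= h ^ 2 * A).
    { unfold Dk. rewrite fsC_multl, fsC_minus.
      rewrite (fsC_ext _ _ (fun n => (Cpow y n - Cpow z n - RtoC h * dterm z n) * b n)%C) by (intros; ring).
      eapply Rle_trans; [apply Cmod_fsC|]. unfold A.
      apply Rle_trans with (fs K (fun n => h ^ 2 / t ^ 2 * (Cmod (b n) * INR n ^ 2 * t ^ n)));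
        [|right; rewrite fs_scal; field; lra].
      apply fs_le. intros i _. rewrite Cmod_mult.
      pose proof (poly_est2 z (RtoC h) t i Hzt Hy) as E2. fold y in E2. rewrite Hmh in E2.
      pose proof (Cmod_ge_0 (b i)).
      assert (Cmod (Cpow y i - Cpow z i - RtoC h * dterm z i) <= INR i ^ 2 * h ^ 2 * t ^ i / t ^ 2).
      { apply (Rmult_le_reg_l (t ^ 2)). nra. unfold Rdiv. 
        replace (t ^ 2 * (INR i ^ 2 * h ^ 2 * t ^ i * / t ^ 2)) with (INR i ^ 2 * h ^ 2 * t ^ i) by (field; lra). exact E2. }
      apply Rle_trans with (INR i ^ 2 * h ^ 2 * t ^ i / t ^ 2 * Cmod (b i)).
      apply Rmult_le_compat_r; auto. right. field. lra. }
    assert (P2 : Cmod (fsC m (fun k => Cpow y (K + k)%nat * b (K + k)%nat - Cpow z (K + k)%nat * b (K + k)%nat)%C) <= h * tau).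
    { eapply Rle_trans; [apply Cmod_fsC|].
      apply Rle_trans with (h / t * fs m (fun k => Cmod (b (K + k)%nat) * INR (K + k) * t ^ (K + k))).
      - rewrite <- fs_scal. apply fs_le. intros i _.
        replace (Cpow y (K + i)%nat * b (K + i)%nat - Cpow z (K + i)%nat * b (K + i)%nat)%C
          with ((Cpow y (K + i)%nat - Cpow z (K + i)%nat) * b (K + i)%nat)%C by ring.
        rewrite Cmod_mult. pose proof (poly_est1 z (RtoC h) t (K + i) Hzt Hy) as E1.
        fold y in E1. rewrite Hmh in E1. pose proof (Cmod_ge_0 (b (K + i)%nat)).
        assert (Cmod (Cpow y (K + i) - Cpow z (K + i)) <= INR (K + i) * h * t ^ (K + i) / t).
        { apply (Rmult_le_reg_l t). lra. unfold Rdiv.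
          replace (t * (INR (K + i) * h * t ^ (K + i) * / t)) with (INR (K + i) * h * t ^ (K + i)) by (field; lra).
          exact E1. }
        apply Rle_trans with (INR (K + i) * h * t ^ (K + i) / t * Cmod (b (K + i)%nat)).
        apply Rmult_le_compat_r; auto. right. field. lra.
      - pose proof (tail_b b t B s K m ltac:(lra) HB ltac:(lra) Hb). unfold tau.
        replace (h * (B * s ^ K / (t * (1 - s) ^ 2))) with (h / t * (B * s ^ K / (1 - s) ^ 2)) by (field; split; nra).
        apply Rmult_le_compat_l; auto. apply Rlt_le, Rdiv_lt_0_compat; lra. }
    replace (fsC K (fun n => Cpow y n * b n - Cpow z n * b n)%C +
       fsC m (fun k => Cpow y (K + k)%nat * b (K + k)%nat - Cpow z (K + k)%nat * b (K + k)%nat)%C - RtoC h * Dk K b z)%C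
     with ((fsC K (fun n => Cpow y n * b n - Cpow z n * b n)%C - RtoC h * Dk K b z) +
       fsC m (fun k => Cpow y (K + k)%nat * b (K + k)%nat - Cpow z (K + k)%nat * b (K + k)%nat)%C)%C by ring.
    eapply Rle_trans; [apply Cmod_triangle|]. lra. }
  assert (Hfin : h * Cmod (l - Dk K b z) <= h ^ 2 * A + h * tau + eps * h).
  { rewrite <- Hmh, <- Cmod_mult.
    replace (RtoC h * (l - Dk K b z))%C with
      ((f y - f z - RtoC h * Dk K b z) - (f y - f z - RtoC h * l))%C by ring.
    eapply Rle_trans; [apply Cmod_triangle|]. rewrite Cmod_opp. rewrite Hmh. lra. }
  assert (Cmod (l - Dk K b z) <= h * A + tau + eps).
  { apply (Rmult_le_reg_l h); auto. nra. }
  unfold eps in *. lra.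
Qed.


Lemma cpow_polar r x n :
  Cpow (r * cos x, r * sin x) n = (r ^ n * cos (INR n * x), r ^ n * sin (INR n * x)).
Proof.
  induction n.
  - simpl. rewrite Rmult_0_l, cos_0, sin_0. unfold RtoC. f_equal; ring.
  - cbn [Cpow]. rewrite IHn, S_INR. unfold Cmult; simpl.
    replace ((INR n + 1) * x) with (x + INR n * x) by ring. rewrite cos_plus, sin_plus.
    f_equal; ring.
Qed.

Lemma fs_telescope n (g : nat -> R) : fs n (fun j => g (S j) - g j) = g n - g O.
Proof. induction n; simpl. ring. rewrite IHn. ring. Qed.

Lemma orth_pos K d : (0 < d)%nat -> (d < K)%nat ->
  fs K (fun j => cos (INR d * INR j * (2 * PI / INR K))) = 0 /\
  fs K (fun j => sin (INR d * INR j * (2 * PI / INR K))) = 0.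
Proof.
  intros Hd HK. set (phi := INR d * (2 * PI / INR K)).
  assert (HKp : 0 < INR K) by (apply lt_0_INR; lia).
  assert (Hs : 0 < sin (phi / 2)).
  { apply sin_gt_0; unfold phi.
    - apply Rmult_lt_0_compat; [|lra]. apply Rmult_lt_0_compat. apply lt_0_INR; lia.
      apply Rdiv_lt_0_compat; [pose proof PI_RGT_0|]; lra.
    - replace (INR d * (2 * PI / INR K) / 2) with (PI * (INR d / INR K)) by (field; lra).
      rewrite <- (Rmult_1_r PI) at 2. apply Rmult_lt_compat_l. apply PI_RGT_0.
      apply (Rmult_lt_reg_r (INR K)); auto. unfold Rdiv. rewrite Rmult_assoc, Rinv_l by lra.
      rewrite Rmult_1_l, Rmult_1_r. apply lt_INR; auto. }
  assert (HKphi : INR K * phi = 2 * INR d * PI) by (unfold phi; field; lra).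
  split.
  - set (g := fun j => sin ((INR j - / 2) * phi)).
    assert (E : fs K (fun j => 2 * sin (phi / 2) * cos (INR d * INR j * (2 * PI / INR K)))
               = fs K (fun j => g (S j) - g j)).
    { apply fs_ext; intros j _. unfold g. rewrite S_INR.
      replace ((INR j + 1 - / 2) * phi) with (INR j * phi + phi / 2) by field.
      replace ((INR j - / 2) * phi) with (INR j * phi - phi / 2) by field.
      rewrite sin_plus, sin_minus. replace (INR d * INR j * (2 * PI / INR K)) with (INR j * phi) by (unfold phi; ring).
      ring. }
    rewrite fs_telescope in E. unfold g in E. simpl INR in E.
    replace ((INR K - / 2) * phi) with ((0 - / 2) * phi + 2 * INR d * PI) in E by (rewrite <- HKphi; ring).
    rewrite sin_period in E. rewrite Rminus_diag, fs_scal in E.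
    apply Rmult_integral in E. destruct E; [lra|auto].
  - set (g := fun j => cos ((INR j - / 2) * phi)).
    assert (E : fs K (fun j => 2 * sin (phi / 2) * sin (INR d * INR j * (2 * PI / INR K)))
               = - fs K (fun j => g (S j) - g j)).
    { rewrite <- (Rmult_1_l (fs K (fun j => g (S j) - g j))), Ropp_mult_distr_l, <- fs_scal.
      apply fs_ext; intros j _. unfold g. rewrite S_INR.
      replace ((INR j + 1 - / 2) * phi) with (INR j * phi + phi / 2) by field.
      replace ((INR j - / 2) * phi) with (INR j * phi - phi / 2) by field.
      rewrite cos_plus, cos_minus. replace (INR d * INR j * (2 * PI / INR K)) with (INR j * phi) by (unfold phi; ring).
      ring. }
    rewrite fs_telescope in E. unfold g in E. simpl INR in E.
    replace ((INR K - / 2) * phi) with ((0 - / 2) * phi + 2 * INR d * PI) in E by (rewrite <- HKphi; ring).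
    rewrite cos_period in E. rewrite Rminus_diag, Ropp_0, fs_scal in E.
    apply Rmult_integral in E. destruct E; [lra|auto].
Qed.

Definition theta (K j : nat) : R := 2 * PI * INR j / INR K.

Lemma orth K n m : (n < K)%nat -> (m < K)%nat ->
  fs K (fun j => cos ((INR n - INR m) * theta K j)) = (if Nat.eq_dec n m then INR K else 0) /\
  fs K (fun j => sin ((INR n - INR m) * theta K j)) = 0.
Proof.
  intros Hn Hm. assert (HKp : 0 < INR K) by (apply lt_0_INR; lia).
  destruct (Nat.eq_dec n m) as [->|Hnm].
  - destruct (Nat.eq_dec m m); [|lia]. split.
    + rewrite (fs_ext _ _ (fun _ => 1)) by (intros; rewrite Rminus_diag, Rmult_0_l, cos_0; auto).
      clear. induction K; simpl fs. simpl; ring. rewrite IHK, S_INR. ring.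
    + rewrite (fs_ext _ _ (fun _ => 0)) by (intros; rewrite Rminus_diag, Rmult_0_l, sin_0; auto).
      apply fs_const0.
  - destruct (proj1 (Nat.lt_gt_cases n m) Hnm) as [H|H]; destruct (Nat.eq_dec n m); try lia.
    + destruct (orth_pos K (m - n) ltac:(lia) ltac:(lia)) as [Hc Hs]. split.
      * rewrite <- Hc. apply fs_ext; intros j _. rewrite minus_INR by lia. rewrite <- cos_neg. f_equal.
        unfold theta. field. lra.
      * rewrite (fs_ext _ _ (fun j => -1 * sin (INR (m - n) * INR j * (2 * PI / INR K)))).
        rewrite fs_scal, Hs. ring.
        intros j _. rewrite minus_INR by lia.
        replace (-1 * sin ((INR m - INR n) * INR j * (2 * PI / INR K))) with (- sin ((INR m - INR n) * INR j * (2 * PI / INR K))) by ring.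
        rewrite <- sin_neg. f_equal. unfold theta. field. lra.
    + destruct (orth_pos K (n - m) ltac:(lia) ltac:(lia)) as [Hc Hs]. split.
      * rewrite <- Hc. apply fs_ext; intros j _. rewrite minus_INR by lia. f_equal.
        unfold theta. field. lra.
      * rewrite <- Hs. apply fs_ext; intros j _. rewrite minus_INR by lia. f_equal.
        unfold theta. field. lra.
Qed.

Definition zj (K : nat) (r : R) (j : nat) : C := (r * cos (theta K j), r * sin (theta K j)).

Lemma parseval K r (c : nat -> C) : (0 < K)%nat ->
  fs K (fun j => Cmod (fsC K (fun n => Cpow (zj K r j) n * c n)%C) ^ 2)
  = INR K * fs K (fun n => Cmod (c n) ^ 2 * r ^ (2 * n)).
Proof.
  intros HK.
  set (X := fun n j => r ^ n * cos (INR n * theta K j) * fst (c n) - r ^ n * sin (INR n * theta K j) * snd (c n)).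
  set (Y := fun n j => r ^ n * cos (INR n * theta K j) * snd (c n) + r ^ n * sin (INR n * theta K j) * fst (c n)).
  rewrite (fs_ext _ _ (fun j => fs K (fun n => fs K (fun m => X n j * X m j + Y n j * Y m j)))).
  2:{ intros j _. rewrite Cmod2_alt. unfold Re, Im. rewrite fsC_fst, fsC_snd.
      rewrite (fs_ext _ _ (fun n => X n j)), (fs_ext K (fun i => snd _) (fun n => Y n j)).
      - rewrite !pow2_sqr || idtac. simpl (_ ^ 2). rewrite !Rmult_1_r, !fs_mul_fs, <- fs_plus.
        apply fs_ext; intros. rewrite <- fs_plus. reflexivity.
      - intros i _. unfold zj, Y. rewrite cpow_polar. destruct (c i); simpl; ring.
      - intros i _. unfold zj, X. rewrite cpow_polar. destruct (c i); simpl; ring. }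
  rewrite fs_swap. rewrite (fs_ext _ _ (fun n => fs K (fun m => fs K (fun j => X n j * X m j + Y n j * Y m j)))).
  2:{ intros n _. apply fs_swap. }
  rewrite (fs_ext _ _ (fun n => INR K * (Cmod (c n) ^ 2 * r ^ (2 * n)))).
  { apply fs_scal. }
  intros n Hn.
  rewrite (fs_ext _ _ (fun m => if Nat.eq_dec n m then INR K * (Cmod (c n) ^ 2 * r ^ (2 * n)) else 0)).
  { apply fs_delta; auto. }
  intros m Hm.
  set (A := r ^ n * r ^ m * (fst (c n) * fst (c m) + snd (c n) * snd (c m))).
  set (Bc := r ^ n * r ^ m * (fst (c n) * snd (c m) - snd (c n) * fst (c m))).
  rewrite (fs_ext _ _ (fun j => A * cos ((INR n - INR m) * theta K j) + Bc * sin ((INR n - INR m) * theta K j))).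
  2:{ intros j _. unfold X, Y, A, Bc.
      replace ((INR n - INR m) * theta K j) with (INR n * theta K j - INR m * theta K j) by ring.
      rewrite cos_minus, sin_minus. ring. }
  rewrite fs_plus, fs_scal, fs_scal. destruct (orth K n m Hn Hm) as [Hc Hs]. rewrite Hc, Hs.
  destruct (Nat.eq_dec n m).
  - subst m. unfold A. rewrite Cmod2_alt. unfold Re, Im. replace (2 * n)%nat with (n + n)%nat by lia.
    rewrite pow_add. ring.
  - ring.
Qed.


Lemma e_lt_3 : exp 1 < 3.
Proof.
  set (a := exp (1/8)).
  assert (Ha : a * exp (-(1/8)) = 1) by (unfold a; rewrite <- exp_plus, Rplus_opp_r, exp_0; auto).
  pose proof (exp_ineq1_le (-(1/8))). pose proof (exp_pos (1/8)). fold a in H0.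
  assert (Ha8 : a <= 8/7) by nra.
  assert (E : exp 1 = ((a ^ 2) ^ 2) ^ 2).
  { unfold a. simpl. rewrite !Rmult_1_r, <- !exp_plus. f_equal. field. }
  rewrite E. rewrite <- !pow_mult. simpl (2 * (2 * 2))%nat.
  apply Rle_lt_trans with ((8/7) ^ 8). apply pow_incr; lra. simpl. lra.
Qed.

Lemma e_gt_2 : 2 < exp 1.
Proof. pose proof (exp_ineq1 1 ltac:(lra)). lra. Qed.

Lemma alpha_bounds : 9 < alpha < 16.
Proof. unfold alpha. pose proof e_lt_3. pose proof e_gt_2. simpl. nra. Qed.

Lemma Cmod_polar a x : 0 <= a -> Cmod (a * cos x, a * sin x) = a.
Proof.
  intros Ha. unfold Cmod. cbn [fst snd].
  replace ((a * cos x) ^ 2 + (a * sin x) ^ 2) with (a ^ 2 * (Rsqr (sin x) + Rsqr (cos x))) by (unfold Rsqr; ring).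
  rewrite sin2_cos2, Rmult_1_r. apply sqrt_pow2; auto.
Qed.

Lemma wp_bound u : Cmod u < 1 -> Cmod (wp u) <= 1 + exp 1.
Proof.
  intros Hu. unfold wp. eapply Rle_trans; [apply Cmod_triangle|]. rewrite Cmod_1, Cmod_mult.
  unfold Cexp. rewrite Cmod_polar by (apply Rlt_le, exp_pos).
  pose proof (re_le_Cmod u). unfold Re in H. pose proof (Rle_abs (fst u)).
  assert (exp (fst u) <= exp 1) by (apply Rlt_le, exp_increasing; lra).
  pose proof (Cmod_ge_0 u). pose proof (exp_pos (fst u)).
  assert (Cmod u * exp (fst u) <= 1 * exp 1) by (apply Rmult_le_compat; lra). lra.
Qed.

Lemma fs_const n c : fs n (fun _ => c) = INR n * c.
Proof. induction n; simpl fs. simpl; ring. rewrite IHn, S_INR; ring. Qed.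

Definition Edef (B s t : R) (K : nat) : R :=
  let c := 1 + exp 1 in let S := B / (1 - s) ^ 2 in
  let T := B * s ^ K / (t * (1 - s) ^ 2) + B * s ^ K / (1 - s) in
  2 * c * (c + 1) * S * T + (c + 1) ^ 2 * T ^ 2.

Lemma key_K (f : C -> C) (b : nat -> C) r B s t K :
  Sstar_wp f ->
  (forall z, inD z -> @is_pseries C_AbsRing C_NormedModule b z (f z)) ->
  0 < r -> r < t -> t < 1 -> 0 <= B -> 0 < s < 1 ->
  (forall n, Cmod (b n) * t ^ n <= B * s ^ (2 * n)) -> (0 < K)%nat ->
  fs K (fun n => (INR n ^ 2 - alpha) * Cmod (b n) ^ 2 * r ^ (2 * n)) <= Edef B s t K.
Proof.
  intros HS Hp Hr Hrt Ht1 HB Hs Hb HK.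
  destruct HS as [HA [Hnz [f' [Hder Hsub]]]]. destruct Hsub as [w [_ [_ [HwD Hw]]]].
  set (c := 1 + exp 1). assert (Hc : 3 < c) by (unfold c; pose proof e_gt_2; lra).
  assert (Hal : alpha = c ^ 2) by reflexivity.
  set (Sb := B / (1 - s) ^ 2).
  set (tau := B * s ^ K / (t * (1 - s) ^ 2)). set (Tf := B * s ^ K / (1 - s)).
  assert (Htau : 0 <= tau).
  { unfold tau. apply Rmult_le_pos. apply Rmult_le_pos; auto; apply pow_le; lra.
    apply Rlt_le, Rinv_0_lt_compat. apply Rmult_lt_0_compat; [lra|]. apply pow_lt; lra. }
  assert (HTf : 0 <= Tf).
  { unfold Tf. apply Rmult_le_pos. apply Rmult_le_pos; auto; apply pow_le; lra.
    apply Rlt_le, Rinv_0_lt_compat; lra. }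
  set (F := fun j => fsC K (fun n => Cpow (zj K r j) n * b n)%C).
  set (G := fun j => fsC K (fun n => Cpow (zj K r j) n * (b n * RtoC (INR n)))%C).
  assert (Hpt : forall j, Cmod (G j) ^ 2 <= alpha * Cmod (F j) ^ 2 + Edef B s t K).
  { intros j. set (z := zj K r j).
    assert (Hz : Cmod z = r) by (unfold z, zj; apply Cmod_polar; lra).
    assert (HzD : inD z) by (unfold inD; lra).
    assert (Hz0 : z <> 0%C).
    { intros E. rewrite E, Cmod_0 in Hz. lra. }
    set (l := f' z). pose proof (Hder z HzD) as Hl. fold l in Hl.
    pose proof (deriv_coeff b f t B s z l K ltac:(lra) HB Hs Hb Hp ltac:(lra) Hl) as Hd. fold tau in Hd.
    assert (HzDk : (z * Dk K b z)%C = G j).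
    { unfold Dk, G. fold z. rewrite fsC_multl. apply fsC_ext; intros i _.
      replace (z * (dterm z i * b i))%C with ((z * dterm z i) * b i)%C by ring.
      rewrite dterm_z. ring. }
    assert (HG : Cmod (z * l - G j) <= tau).
    { rewrite <- HzDk. replace (z * l - z * Dk K b z)%C with (z * (l - Dk K b z))%C by ring.
      rewrite Cmod_mult, Hz. pose proof (Cmod_ge_0 (l - Dk K b z)). nra. }
    assert (Hterm : forall k, Cmod (Cpow z k * b k)%C <= B * s ^ k).
    { intros k. rewrite Cmod_mult, Cmod_pow, Hz.
      apply Rle_trans with (Cmod (b k) * t ^ k).
      rewrite Rmult_comm. apply Rmult_le_compat_l. apply Cmod_ge_0. apply pow_incr; lra.
      eapply Rle_trans; [apply Hb|]. apply Rmult_le_compat_l; auto. apply pow_decr; [lra|lia]. }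
    assert (HF : Cmod (f z - F j) <= Tf).
    { apply (pseries_LB b z (f z) (F j) Tf K (Hp z HzD)). intros M HM.
      replace (S M) with (K + (S M - K))%nat by lia. rewrite fsC_split.
      unfold F. fold z.
      replace (fsC K (fun k => Cpow z k * b k) + fsC (S M - K) (fun k => Cpow z (K + k) * b (K + k)%nat) -
        fsC K (fun n => Cpow z n * b n))%C with (fsC (S M - K) (fun k => Cpow z (K + k) * b (K + k)%nat))%C by ring.
      eapply Rle_trans; [apply Cmod_fsC|].
      eapply Rle_trans; [|apply (tail_a b t B s K (S M - K) ltac:(lra) HB ltac:(lra) Hb)].
      apply fs_le; intros i _. rewrite Cmod_mult, Cmod_pow, Hz. rewrite Rmult_comm.
      apply Rmult_le_compat_l. apply Cmod_ge_0. apply pow_incr; lra. }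
    assert (Hsubz : Cmod (z * l) <= c * Cmod (f z)).
    { specialize (Hw z HzD). destruct (Ceq_dec z 0) as [E|_]; [contradiction|].
      specialize (Hnz z HzD Hz0).
      assert (E : (z * l)%C = (wp (w z) * f z)%C).
      { rewrite <- Hw. unfold l. field. auto. }
      rewrite E, Cmod_mult. apply Rmult_le_compat_r. apply Cmod_ge_0.
      apply wp_bound. apply (HwD z HzD). }
    assert (HFS : Cmod (F j) <= Sb).
    { unfold F; fold z. eapply Rle_trans; [apply Cmod_fsC|].
      apply Rle_trans with (fs K (fun k => B * s ^ k)). apply fs_le; intros; apply Hterm.
      rewrite fs_scal. unfold Sb. replace (B / (1 - s) ^ 2) with (B * (/ (1 - s) * / (1 - s))) by (field; lra).
      apply Rmult_le_compat_l; auto. eapply Rle_trans. apply fs_geom_le; lra.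
      rewrite <- (Rmult_1_r (/ (1 - s))) at 1. apply Rmult_le_compat_l.
      apply Rlt_le, Rinv_0_lt_compat; lra. rewrite <- Rinv_1. apply Rinv_le_contravar; lra. }
    pose proof (Cmod_ge_0 (G j)) as HG0. pose proof (Cmod_ge_0 (F j)) as HF0.
    assert (HGb : Cmod (G j) <= c * Cmod (F j) + (c + 1) * (tau + Tf)).
    { assert (Cmod (G j) <= Cmod (z * l) + tau).
      { replace (G j) with (z * l - (z * l - G j))%C by ring.
        eapply Rle_trans; [apply Cmod_triangle|]. rewrite Cmod_opp. lra. }
      assert (Cmod (f z) <= Cmod (F j) + Tf).
      { replace (f z) with (F j + (f z - F j))%C by ring.
        eapply Rle_trans; [apply Cmod_triangle|]. lra. }
      nra. }
    assert (HG2 : Cmod (G j) ^ 2 <= (c * Cmod (F j) + (c + 1) * (tau + Tf)) ^ 2).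
    { apply pow_incr; lra. }
    unfold Edef. fold c. fold Sb. fold tau Tf. rewrite Hal.
    assert (0 <= Sb) by lra.
    assert ((c + 1) * (tau + Tf) * Cmod (F j) <= (c + 1) * (tau + Tf) * Sb).
    { apply Rmult_le_compat_l; [nra|auto]. }
    nra. }
  assert (Hsum : fs K (fun j => Cmod (G j) ^ 2) <= alpha * fs K (fun j => Cmod (F j) ^ 2) + INR K * Edef B s t K).
  { rewrite <- fs_scal, <- fs_const, <- fs_plus. apply fs_le; intros; apply Hpt. }
  unfold G, F in Hsum. rewrite !parseval in Hsum by auto.
  assert (HKp : 0 < INR K) by (apply lt_0_INR; lia).
  rewrite (fs_ext _ _ (fun n => Cmod (b n * RtoC (INR n))%C ^ 2 * r ^ (2 * n) + (- alpha) * (Cmod (b n) ^ 2 * r ^ (2 * n)))).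
  2:{ intros i _. rewrite Cmod_mult, Cmod_R, Rabs_pos_eq by apply pos_INR. ring. }
  rewrite fs_plus, fs_scal.
  apply (Rmult_le_reg_l (INR K)); auto. nra.
Qed.


Lemma small_pow s Q e : 0 < s < 1 -> 0 <= Q -> 0 < e -> forall L, exists K, (L <= K)%nat /\ Q * s ^ K <= e.
Proof.
  intros Hs HQ He L.
  destruct (pow_lt_1_zero s ltac:(rewrite Rabs_pos_eq; lra) (e / (Q + 1)) ltac:(apply Rdiv_lt_0_compat; lra)) as [N HN].
  exists (max N L). split; [lia|]. specialize (HN (max N L) ltac:(lia)).
  rewrite Rabs_pos_eq in HN by (apply pow_le; lra).
  apply Rle_trans with (Q * (e / (Q + 1))). apply Rmult_le_compat_l; lra.
  apply (Rmult_le_reg_r (Q + 1)); [lra|]. unfold Rdiv. rewrite Rmult_assoc, Rmult_assoc, Rinv_l by lra. nra.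
Qed.

Lemma coef_nonneg n (x : C) : (4 <= n)%nat -> 0 <= (INR n ^ 2 - alpha) * Cmod x ^ 2.
Proof.
  intros Hn. apply Rmult_le_pos; [|apply pow2_ge_0]. pose proof alpha_bounds.
  assert (4 <= INR n) by (replace 4 with (INR 4) by (simpl; ring); apply le_INR; auto). nra.
Qed.

Lemma key_L (f : C -> C) (b : nat -> C) r L :
  Sstar_wp f ->
  (forall z, inD z -> @is_pseries C_AbsRing C_NormedModule b z (f z)) ->
  0 < r < 1 -> (4 <= L)%nat ->
  fs L (fun n => (INR n ^ 2 - alpha) * Cmod (b n) ^ 2 * r ^ (2 * n)) <= 0.
Proof.
  intros HS Hp Hr HL. set (t := (1 + r) / 2).
  destruct (envelope2 b f Hp t ltac:(unfold t; lra)) as [B [s [HB [Hs Hb]]]].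
  apply my_le_eps; intros e He. rewrite Rplus_0_l.
  set (c := 1 + exp 1). pose proof e_gt_2.
  set (Cst := B / (t * (1 - s) ^ 2) + B / (1 - s)).
  assert (HCst : 0 <= Cst).
  { unfold Cst. assert (0 < t * (1 - s) ^ 2) by (apply Rmult_lt_0_compat; [unfold t; lra|apply pow_lt; lra]).
    assert (0 <= B / (t * (1 - s) ^ 2)) by (apply Rmult_le_pos; [lra|apply Rlt_le, Rinv_0_lt_compat; lra]).
    assert (0 <= B / (1 - s)) by (apply Rmult_le_pos; [lra|apply Rlt_le, Rinv_0_lt_compat; lra]). lra. }
  set (Sb := B / (1 - s) ^ 2).
  assert (HSb : 0 <= Sb) by (apply Rmult_le_pos; [lra|apply Rlt_le, Rinv_0_lt_compat, pow_lt; lra]).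
  set (Q := 2 * c * (c + 1) * Sb * Cst + (c + 1) ^ 2 * Cst ^ 2).
  assert (HQ : 0 <= Q).
  { unfold Q, c. apply Rplus_le_le_0_compat. apply Rmult_le_pos; auto. apply Rmult_le_pos; auto.
    apply Rmult_le_pos; [|lra]. lra. apply Rmult_le_pos; apply pow2_ge_0. }
  destruct (small_pow s Q e Hs HQ He L) as [K [HLK HK]].
  assert (HE : Edef B s t K <= Q * s ^ K).
  { unfold Edef. fold c. fold Sb.
    replace (B * s ^ K / (t * (1 - s) ^ 2) + B * s ^ K / (1 - s)) with (Cst * s ^ K)
      by (unfold Cst; field; split; [lra|unfold t; lra]).
    unfold Q. assert (0 <= s ^ K <= 1) by (split; [apply pow_le; lra|rewrite <- (pow1 K); apply pow_incr; lra]).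
    assert ((Cst * s ^ K) ^ 2 <= Cst ^ 2 * s ^ K).
    { replace ((Cst * s ^ K) ^ 2) with (Cst ^ 2 * (s ^ K * s ^ K)) by ring.
      apply Rmult_le_compat_l; [apply pow2_ge_0|nra]. }
    assert (0 <= (c + 1) ^ 2) by apply pow2_ge_0. 
    assert (2 * c * (c + 1) * Sb * (Cst * s ^ K) = 2 * c * (c + 1) * Sb * Cst * s ^ K) by ring.
    nra. }
  pose proof (key_K f b r B s t K HS Hp ltac:(lra) ltac:(unfold t; lra) ltac:(unfold t; lra) HB Hs Hb ltac:(lia)) as HKK.
  replace K with (L + (K - L))%nat in HKK by lia. rewrite fs_split in HKK.
  assert (0 <= fs (K - L) (fun k => (INR (L + k) ^ 2 - alpha) * Cmod (b (L + k)%nat) ^ 2 * r ^ (2 * (L + k)))).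
  { apply fs_nonneg; intros i _. apply Rmult_le_pos. apply coef_nonneg; lia. apply pow_le; lra. }
  replace (L + (K - L))%nat with K in HKK by lia. lra.
Qed.

Lemma b0_zero (f : C -> C) (b : nat -> C) :
  Sstar_wp f ->
  (forall z, inD z -> @is_pseries C_AbsRing C_NormedModule b z (f z)) -> b O = 0%C.
Proof.
  intros [[_ [Hf0 _]] _] Hp.
  assert (H0D : inD 0%C) by (unfold inD; rewrite Cmod_0; lra).
  assert (H : Cmod (f 0%C - b O) <= 0).
  { apply (pseries_LB b 0%C (f 0%C) (b O) 0 O (Hp _ H0D)). intros M _.
    assert (E : fsC (S M) (fun k => Cpow 0%C k * b k)%C = b O).
    { induction M. simpl. ring. cbn [fsC] in *. rewrite IHM. cbn [Cpow]. ring. }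
    rewrite E. unfold Cminus. rewrite Cplus_opp_r, Cmod_0. lra. }
  pose proof (Cmod_ge_0 (f 0%C - b O)).
  assert (Cmod (f 0%C - b O) = 0) by lra. apply Cmod_eq_0 in H1.
  rewrite Hf0 in H1. replace (b O) with (- (0 - b O))%C by ring. rewrite H1. ring.
Qed.

Lemma Dk_zero (b : nat -> C) K : (2 <= K)%nat -> Dk K b 0%C = b 1%nat.
Proof.
  intros HK. induction K as [|K IH]; [lia|].
  destruct (Nat.eq_dec K 1) as [->|HK1].
  - unfold Dk, dterm. cbn [fsC pred Cpow]. simpl INR. ring.
  - unfold Dk in *. cbn [fsC]. rewrite IH by lia. unfold dterm. destruct K as [|K]; [lia|].
    cbn [pred]. destruct K; [lia|]. cbn [Cpow]. ring.
Qed.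

Lemma b1_one (f : C -> C) (b : nat -> C) :
  Sstar_wp f ->
  (forall z, inD z -> @is_pseries C_AbsRing C_NormedModule b z (f z)) -> b 1%nat = 1%C.
Proof.
  intros HS Hp. destruct HS as [[_ [_ Hd1]] _].
  destruct (envelope2 b f Hp (1/2) ltac:(lra)) as [B [s [HB [Hs Hb]]]].
  assert (H : Cmod (1 - b 1%nat) <= 0).
  { apply my_le_eps; intros e He. rewrite Rplus_0_l.
    set (Q := B / (1/2 * (1 - s) ^ 2)).
    assert (HQ : 0 <= Q) by (apply Rmult_le_pos; [lra|apply Rlt_le, Rinv_0_lt_compat, Rmult_lt_0_compat; [lra|apply pow_lt; lra]]).
    destruct (small_pow s Q e Hs HQ He 2) as [K [HK HKe]].
    pose proof (deriv_coeff b f (1/2) B s 0%C (RtoC 1) K ltac:(lra) HB Hs Hb Hp ltac:(rewrite Cmod_0; lra) Hd1) as D.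
    rewrite Dk_zero in D by auto.
    replace (B * s ^ K / (1 / 2 * (1 - s) ^ 2)) with (Q * s ^ K) in D by (unfold Q; field; lra). lra. }
  pose proof (Cmod_ge_0 (1 - b 1%nat)). assert (Cmod (1 - b 1%nat) = 0) by lra.
  apply Cmod_eq_0 in H1. replace (b 1%nat) with (1 - (1 - b 1%nat))%C by ring.
  rewrite H1. ring.
Qed.

Lemma bernoulli r m : 0 <= r <= 1 -> 1 - r ^ m <= INR m * (1 - r).
Proof.
  intros Hr. induction m. simpl; lra.
  rewrite S_INR. simpl. assert (r ^ m <= 1) by (rewrite <- (pow1 m); apply pow_incr; lra).
  assert (0 <= r ^ m) by (apply pow_le; lra). nra.
Qed.

Lemma partial_bound (f : C -> C) (b : nat -> C) L :
  Sstar_wp f ->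
  (forall z, inD z -> @is_pseries C_AbsRing C_NormedModule b z (f z)) -> (4 <= L)%nat ->
  fs (L - 2) (fun k => (INR (k + 2) ^ 2 - alpha) * Cmod (b (k + 2)%nat) ^ 2) <= alpha - 1.
Proof.
  intros HS Hp HL.
  pose proof (b0_zero f b HS Hp) as B0. pose proof (b1_one f b HS Hp) as B1.
  set (g := fun k => (INR (k + 2) ^ 2 - alpha) * Cmod (b (k + 2)%nat) ^ 2).
  assert (Hr : forall r, 0 < r < 1 -> fs (L - 2) (fun k => g k * r ^ (2 * (k + 2))) <= alpha - 1).
  { intros r Hr. pose proof (key_L f b r L HS Hp Hr HL) as K.
    set (F := fun n => (INR n ^ 2 - alpha) * Cmod (b n) ^ 2 * r ^ (2 * n)) in K.
    assert (E : fs L F = fs 2 F + fs (L - 2) (fun k => g k * r ^ (2 * (k + 2)))).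
    { replace L with (2 + (L - 2))%nat at 1 by lia. rewrite fs_split. apply Rplus_eq_compat_l.
      apply fs_ext; intros i _. unfold F, g. rewrite (Nat.add_comm i 2). ring. }
    rewrite E in K. cbn [fs] in K. unfold F in K. rewrite B0, B1, Cmod_0, Cmod_1 in K.
    change (INR 0) with 0 in K. change (INR 1) with 1 in K.
    pose proof alpha_bounds. assert (r ^ (2 * 1) <= 1) by (rewrite <- (pow1 (2 * 1)); apply pow_incr; lra).
    assert (0 <= r ^ (2 * 1)) by (apply pow_le; lra).
    simpl (r ^ (2 * 0)) in K. nra. }
  set (W := fs (L - 2) (fun k => Rabs (g k) * INR (2 * (k + 2)))).
  assert (HW : 0 <= W).
  { apply fs_nonneg; intros. apply Rmult_le_pos; [apply Rabs_pos|apply pos_INR]. }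
  apply my_le_eps; intros e He.
  set (d := Rmin (1/2) (e / (W + 1))).
  assert (Hd : 0 < d <= 1/2) by (unfold d; split; [apply Rmin_glb_lt; [lra|apply Rdiv_lt_0_compat; lra]|apply Rmin_l]).
  assert (HdW : d * W <= e).
  { apply Rle_trans with (e / (W + 1) * W). apply Rmult_le_compat_r; auto. apply Rmin_r.
    apply (Rmult_le_reg_r (W + 1)); [lra|]. unfold Rdiv.
    replace (e * / (W + 1) * W * (W + 1)) with (e * W * ((W + 1) * / (W + 1))) by ring.
    rewrite Rinv_r by lra. nra. }
  set (r := 1 - d). specialize (Hr r ltac:(unfold r; lra)).
  assert (fs (L - 2) g - fs (L - 2) (fun k => g k * r ^ (2 * (k + 2))) <= d * W).
  { unfold W. rewrite <- fs_scal.
    replace (fs (L - 2) g - fs (L - 2) (fun k => g k * r ^ (2 * (k + 2)))) with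
      (fs (L - 2) (fun k => g k * (1 - r ^ (2 * (k + 2))))).
    2:{ rewrite (fs_ext _ (fun k => g k * (1 - r ^ (2 * (k + 2)))) (fun k => g k + (-1) * (g k * r ^ (2 * (k + 2))))) by (intros; ring).
        rewrite fs_plus, fs_scal. ring. }
    apply fs_le; intros i _.
    pose proof (bernoulli r (2 * (i + 2)) ltac:(unfold r; lra)).
    assert (0 <= 1 - r ^ (2 * (i + 2))) by (assert (r ^ (2 * (i + 2)) <= 1) by (rewrite <- (pow1 (2 * (i + 2))); apply pow_incr; unfold r; lra); lra).
    apply Rle_trans with (Rabs (g i) * (1 - r ^ (2 * (i + 2)))).
    apply Rmult_le_compat_r; auto. apply Rle_abs.
    replace (d * (Rabs (g i) * INR (2 * (i + 2)))) with (Rabs (g i) * (INR (2 * (i + 2)) * d)) by ring.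
    apply Rmult_le_compat_l. apply Rabs_pos. replace d with (1 - r) by (unfold r; ring). auto. }
  unfold g in *. lra.
Qed.


Theorem mainTheorem13 :
  (forall (f : C -> C) (b : nat -> C),
     Sstar_wp f ->
     (forall z, inD z -> @is_pseries C_AbsRing C_NormedModule b z (f z)) ->
     ex_series (fun n => (INR (n + 2) ^ 2 - alpha) * Cmod (b (n + 2)%nat) ^ 2) /\
     Series (fun n => (INR (n + 2) ^ 2 - alpha) * Cmod (b (n + 2)%nat) ^ 2)
       <= alpha - 1)
  /\
  (forall (f : C -> C) (b : nat -> C),
     Sstar_wp f ->
     (forall z, inD z -> @is_pseries C_AbsRing C_NormedModule b z (f z)) ->
     b 2%nat = 0%C -> b 3%nat = 0%C ->
     forall k : nat, (4 <= k)%nat ->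
       Cmod (b k) <= sqrt ((alpha - 1) / (INR k ^ 2 - alpha))).
Proof.
  pose proof alpha_bounds as Hal.
  split.
  - intros f b HS Hp.
    set (u := fun n => (INR (n + 2) ^ 2 - alpha) * Cmod (b (n + 2)%nat) ^ 2).
    assert (Hu0 : u O <= 0).
    { unfold u. simpl (0 + 2)%nat. apply Rmult_le_0_r; [|apply pow2_ge_0].
      replace (INR 2) with 2 by (simpl; ring). lra. }
    assert (Hpart : forall N, sum_n u N <= alpha - 1).
    { intros N. rewrite sum_n_fs. destruct N.
      - simpl fs. lra.
      - pose proof (partial_bound f b (S N + 3) HS Hp ltac:(lia)) as P.
        replace (S N + 3 - 2)%nat with (S (S N)) in P by lia. exact P. }
    assert (Hvpos : forall k, 0 <= u (2 + k)%nat) by (intros k; apply coef_nonneg; lia).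
    assert (Hex : ex_series u).
    { apply (ex_series_incr_n u 2).
      assert (Hsv : forall N, sum_n (fun k => u (2 + k)%nat) N <= alpha - 1 - u O - u 1%nat).
      { intros N. pose proof (Hpart (N + 2)%nat) as P. rewrite sum_n_fs in P |- *.
        replace (S (N + 2)) with (2 + S N)%nat in P by lia. rewrite fs_split in P. simpl (fs 2 u) in P. lra. }
      destruct (ex_finite_lim_seq_incr (sum_n (fun k => u (2 + k)%nat)) (alpha - 1 - u O - u 1%nat)) as [l Hl].
      + intros n. rewrite !sum_n_fs. cbn [fs]. pose proof (Hvpos (S n)). lra.
      + exact Hsv.
      + exists l. exact Hl. }
    split; auto.
    pose proof (Series_correct u Hex) as Hs.
    pose proof (is_lim_seq_le (sum_n u) (fun _ => alpha - 1) (Series u) (alpha - 1) Hpart Hs (is_lim_seq_const _)) as Hle.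
    simpl in Hle. exact Hle.
  - intros f b HS Hp H2 H3 k Hk.
    pose proof (partial_bound f b (S k) HS Hp ltac:(lia)) as P.
    set (u := fun n => (INR (n + 2) ^ 2 - alpha) * Cmod (b (n + 2)%nat) ^ 2) in P.
    assert (Hnn : forall i, (i < S k - 2)%nat -> 0 <= u i).
    { intros i _. unfold u. destruct i as [|[|i]].
      - simpl (0 + 2)%nat. rewrite H2, Cmod_0. simpl; lra.
      - simpl (1 + 2)%nat. rewrite H3, Cmod_0. simpl; lra.
      - apply coef_nonneg; lia. }
    pose proof (fs_term_le (S k - 2) u (k - 2) Hnn ltac:(lia)) as T.
    unfold u in T. replace (k - 2 + 2)%nat with k in T by lia.
    assert (Hk4 : 4 <= INR k) by (replace 4 with (INR 4) by (simpl; ring); apply le_INR; auto).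
    assert (Hden : 0 < INR k ^ 2 - alpha) by nra.
    assert (Hb2 : Cmod (b k) ^ 2 <= (alpha - 1) / (INR k ^ 2 - alpha)).
    { apply (Rmult_le_reg_l (INR k ^ 2 - alpha)); auto.
      replace ((INR k ^ 2 - alpha) * ((alpha - 1) / (INR k ^ 2 - alpha))) with (alpha - 1) by (field; lra). fold u in T. lra. }
    rewrite <- (sqrt_pow2 (Cmod (b k))) by apply Cmod_ge_0.
    apply sqrt_le_1_alt. exact Hb2.
Qed.
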